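(* Let $m,n,k$ be positive integers, $A\in\mathbb{R}^{m\times n}$, $x^*\in\mathbb{R}^n$ with support $S^*$ satisfying $1\le|S^*|\le k$, $e\in\mathbb{R}^m$, $y=Ax^*+e$. For every initialization $\mathcal{X}^0\in\mathbb{R}^n$ and every $\eta>0$, consider the Support Exploration Algorithm using the Oracle Update Rule. Then there exists an integer $$t_s\le k\left(1+\frac{2\|\mathcal{X}^0\|_\infty}{\eta\min_{i\in S^*}|x^*_i|}\right)$$ such that $S^*\subseteq S^{t_s}$. Moreover $u^{t_s}=0$ and the algorithm returns a vector in $\arg\min\{\|Ax-y\|_2^2: x\in\mathbb{R}^n,\ \mathrm{supp}(x)\subseteq S^{t_s}\}$.
   Context: $S^*=\{i:x^*_i\neq0\}$. For $v\in\mathbb{R}^n$, $\mathrm{largest}_k(v)$ is the set of indices of the $k$ entries of $v$ with largest absolute value (ties broken by selecting the highest indices). For $S\subseteq\{1,\dots,n\}$, $A_S$ is the submatrix of columns indexed by $S$ and $A_S^\dagger$ its Moore–Penrose pseudoinverse. The Support Exploration Algorithm using the Oracle Update Rule, with inputs $x^*,S^*,k,\eta,y,A$ and initialization $\mathcal{X}^0$, iterates for $t=0,1,2,\dots$: $S^t=\mathrm{largest}_k(\mathcal{X}^t)$; $u^t\in\mathbb{R}^n$ with $u^t_i=-\eta x^*_i$ if $i\in S^*\setminus S^t$ and $u^t_i=0$ otherwise; $\mathcal{X}^{t+1}=\mathcal{X}^t-u^t$; it stops at the first $t$ such that $u^t=0$ and then returns $x$ with $x_i=0$ for $i\notin S^t$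 and $x_{S^t}=A_{S^t}^\dagger y$. *)

(* Defs.v *)
From HB Require Import structures.
From mathcomp Require Import all_boot all_order all_algebra.
From mathcomp Require Import boolp reals.
Set Implicit Arguments. Unset Strict Implicit. Unset Printing Implicit Defensive.
Import Order.TTheory GRing.Theory Num.Theory.
Local Open Scope ring_scope.

Section SEA.
Variable R : realType.

Definition supp n (x : 'cV[R]_n) : {set 'I_n} := [set i | x i 0 != 0].

Definition beats n (v : 'cV[R]_n) (j i : 'I_n) : bool :=
  (`|v i 0| < `|v j 0|) || ((`|v j 0| == `|v i 0|) && (i < j)%N).

(* largest_k(v): the k indices of largest absolute value (all indices if k >= n) *)
Definition largest n (k : nat) (v : 'cV[R]_n) : {set 'I_n} :=
  [set i | (#|[set j | beats v j i]| < k)%N].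

Definition is_mp_pinv p q (M : 'M[R]_(p, q)) (P : 'M[R]_(q, p)) : Prop :=
  [/\ M *m P *m M = M, P *m M *m P = P,
      (M *m P)^T = M *m P & (P *m M)^T = P *m M].

Definition mp_pinv p q (M : 'M[R]_(p, q)) : 'M[R]_(q, p) :=
  match pselect (exists P, is_mp_pinv M P) with
  | left h => projT1 (cid h)
  | right _ => 0
  end.

(* A_S : columns of A indexed by S (in increasing order) *)
Definition colS m n (A : 'M[R]_(m, n)) (S : {set 'I_n}) : 'M[R]_(m, #|S|) :=
  \matrix_(i, j) A i (enum_val j).

Definition embS n (S : {set 'I_n}) : 'M[R]_(n, #|S|) :=
  \matrix_(i, j) (i == enum_val j)%:R.

Section Alg.
Variables (m n k : nat) (xs : 'cV[R]_n) (eta : R) (X0 : 'cV[R]_n).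

Definition Sstar : {set 'I_n} := supp xs.

Fixpoint sea_X (t : nat) : 'cV[R]_n :=
  match t with
  | O => X0
  | t'.+1 =>
      let X := sea_X t' in
      let u := \col_i (if (i \in Sstar) && (i \notin largest k X)
                       then - eta * xs i 0 else 0) in
      X - u
  end.

Definition sea_S (t : nat) : {set 'I_n} := largest k (sea_X t).

Definition sea_u (t : nat) : 'cV[R]_n :=
  \col_i (if (i \in Sstar) && (i \notin sea_S t) then - eta * xs i 0 else 0).

Definition sea_out (A : 'M[R]_(m, n)) (y : 'cV[R]_m) (t : nat) : 'cV[R]_n :=
  embS (sea_S t) *m (mp_pinv (colS A (sea_S t)) *m y).
End Alg.

Definition sqnorm p (v : 'cV[R]_p) : R := \sum_i v i 0 ^+ 2.

Definition normInf p (v : 'cV[R]_p) : R := \big[Num.max/0]_i `|v i 0|.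

(* min_{i in S} |x_i|; the seed normInf x is >= every |x_i|, so for nonempty S
   this is exactly the minimum *)
Definition minAbsOn p (x : 'cV[R]_p) (S : {set 'I_p}) : R :=
  \big[Num.min/normInf x]_(i in S) `|x i 0|.

Definition argmin_on m n (A : 'M[R]_(m, n)) (y : 'cV[R]_m) (S : {set 'I_n})
  (x : 'cV[R]_n) : Prop :=
  supp x \subset S /\
  forall z : 'cV[R]_n, supp z \subset S ->
    sqnorm (A *m x - y) <= sqnorm (A *m z - y).

End SEA.

(* Main.v *)
Require Import Defs.
From HB Require Import structures.
From mathcomp Require Import all_boot all_order all_algebra.
From mathcomp Require Import boolp reals lra.
Import Order.TTheory GRing.Theory Num.Theory.
Local Open Scope ring_scope.

Section LS.
Variable R : realType.

Lemma gram_unit r p (N : 'M[R]_(r, p)) : row_free N -> N *m N^T \in unitmx.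
Proof.
move=> fN; rewrite -row_free_unit; apply: inj_row_free => v Hv.
have H0 : (v *m N) *m (v *m N)^T = 0 by rewrite trmx_mul !mulmxA -(mulmxA v) Hv mul0mx.
have Hs : \sum_i ((v *m N) 0 i) ^+ 2 = 0.
  transitivity (((v *m N) *m (v *m N)^T) 0 0); last by rewrite H0 mxE.
  by rewrite mxE; apply: eq_bigr => i _; rewrite !mxE expr2.
have Hz : v *m N = 0.
  apply/matrixP => i j; rewrite (ord1 i).
  have h := psumr_eq0P (P := xpredT) (fun l _ => sqr_ge0 ((v *m N) 0 l)) Hs (i := j) isT.
  by rewrite [RHS]mxE; apply/eqP; rewrite -sqrf_eq0 h.
by apply: (row_free_inj fN); rewrite /= Hz mul0mx.
Qed.

Lemma mp_exists_fact p q r (B : 'M[R]_(p, r)) (C : 'M[R]_(r, q)) :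
  B^T *m B \in unitmx -> C *m C^T \in unitmx -> exists P, is_mp_pinv (B *m C) P.
Proof.
move=> hB hC.
exists (C^T *m invmx (C *m C^T) *m invmx (B^T *m B) *m B^T).
have sB : (invmx (B^T *m B))^T = invmx (B^T *m B) by rewrite trmx_inv trmx_mul trmxK.
have sC : (invmx (C *m C^T))^T = invmx (C *m C^T) by rewrite trmx_inv trmx_mul trmxK.
have MP : (B *m C) *m (C^T *m invmx (C *m C^T) *m invmx (B^T *m B) *m B^T) =
          B *m invmx (B^T *m B) *m B^T.
  by rewrite !mulmxA -(mulmxA B C C^T) mulmxK.
have PM : (C^T *m invmx (C *m C^T) *m invmx (B^T *m B) *m B^T) *m (B *m C) =
          C^T *m invmx (C *m C^T) *m C.
  by rewrite !mulmxA -(mulmxA _ B^T B) mulmxKV.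
split.
- by rewrite MP !mulmxA -(mulmxA _ B^T B) mulmxKV.
- by rewrite PM !mulmxA -(mulmxA _ C C^T) mulmxKV.
- by rewrite MP !trmx_mul trmxK sB mulmxA.
- by rewrite PM !trmx_mul trmxK sC mulmxA.
Qed.

Lemma mp_exists p q (M : 'M[R]_(p, q)) : exists P, is_mp_pinv M P.
Proof.
rewrite -(mulmx_base M); apply: mp_exists_fact.
  have := @gram_unit _ _ (col_base M)^T; rewrite trmxK; apply.
  by rewrite /row_free mxrank_tr; have := col_base_full M; rewrite /row_full.
by apply: gram_unit; exact: row_base_free.
Qed.

Lemma mp_pinvP p q (M : 'M[R]_(p, q)) : is_mp_pinv M (mp_pinv M).
Proof.
rewrite /mp_pinv; case: pselect => [h|nh]; first exact: (projT2 (cid h)).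
by exfalso; apply: nh; exact: mp_exists.
Qed.

Lemma sqnormE p (v : 'cV[R]_p) : sqnorm v = (v^T *m v) 0 0.
Proof. by rewrite /sqnorm mxE; apply: eq_bigr => i _; rewrite !mxE expr2. Qed.

Lemma supp_embS n (S : {set 'I_n}) (w : 'M[R]_(#|S|, 1)) :
  supp (embS R S *m w) \subset S.
Proof.
apply/subsetP => i; rewrite inE mxE; apply: contraR => iS.
apply/eqP; apply: big1 => j _; rewrite mxE.
have -> : (i == enum_val j) = false.
  by apply/negbTE; apply: contraNneq iS => ->; exact: enum_valP.
by rewrite mul0r.
Qed.

Lemma A_embS m n (A : 'M[R]_(m, n)) (S : {set 'I_n}) : A *m embS R S = colS A S.
Proof.
apply/matrixP => i j; rewrite !mxE (bigD1 (enum_val j)) //= mxE eqxx mulr1.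
rewrite big1 ?addr0 // => l /negbTE nl; by rewrite mxE nl mulr0.
Qed.

Lemma A_supp m n (A : 'M[R]_(m, n)) (S : {set 'I_n}) (z : 'cV[R]_n) :
  supp z \subset S -> A *m z = colS A S *m \col_j z (enum_val j) 0.
Proof.
move=> /subsetP sz; apply/matrixP => i k; rewrite (ord1 k) !mxE.
rewrite (bigID (mem S)) /= [X in _ + X]big1 ?addr0; last first.
  move=> l lS; have : l \notin supp z by apply: contra lS; exact: sz.
  by rewrite inE negbK => /eqP ->; rewrite mulr0.
rewrite big_enum_val; apply: eq_bigr => j _; by rewrite !mxE.
Qed.

Lemma ls_opt p q (M : 'M[R]_(p, q)) (P : 'M[R]_(q, p)) (y : 'cV[R]_p) (w : 'cV[R]_q) :
  is_mp_pinv M P -> sqnorm (M *m (P *m y) - y) <= sqnorm (M *m w - y).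
Proof.
case=> h1 _ h3 _.
have hT : M^T *m (M *m P) = M^T by rewrite -h3 -trmx_mul h1.
set r := M *m (P *m y) - y; set d := M *m (w - P *m y).
have Mr : M^T *m r = 0 by rewrite /r mulmxBr !mulmxA -(mulmxA M^T M P) hT subrr.
have e : M *m w - y = d + r by rewrite /d /r mulmxBr addrA subrK.
have dr : d^T *m r = 0 by rewrite /d trmx_mul -mulmxA Mr mulmx0.
have rd : r^T *m d = 0 by rewrite -(trmxK (r^T *m d)) trmx_mul trmxK dr trmx0.
rewrite e; clearbody r d.
rewrite !sqnormE [(d + r)^T]raddfD /= mulmxDl !mulmxDr dr rd addr0 !mxE.
rewrite add0r lerDr; apply: sumr_ge0 => i _; rewrite mxE -expr2; exact: sqr_ge0.
Qed.

Lemma argmin_out m n (A : 'M[R]_(m, n)) (y : 'cV[R]_m) (S : {set 'I_n}) :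
  argmin_on A y S (embS R S *m (mp_pinv (colS A S) *m y)).
Proof.
split; first exact: supp_embS.
move=> z sz; rewrite mulmxA A_embS (@A_supp _ _ A S z sz); apply: ls_opt.
exact: mp_pinvP.
Qed.
End LS.

Section Dyn.
Variables (R : realType) (n k : nat) (xs : 'cV[R]_n) (eta : R) (X0 : 'cV[R]_n).
Variable (eta_gt0 : 0 < eta) (kS : (#|supp xs| <= k)%N).

Let X t := sea_X k xs eta X0 t.
Let St t := sea_S k xs eta X0 t.
Definition cnd t i := (i \in supp xs) && (i \notin St t).
Definition acnt i t := (\sum_(s < t) cnd s i)%N.

Lemma X_eq t i : X t i 0 = X0 i 0 + (acnt i t)%:R * (eta * xs i 0).
Proof.
elim: t => [|t IH]; first by rewrite /acnt big_ord0 mul0r addr0.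
rewrite /X /= !mxE -/(X t) IH /acnt big_ord_recr /= natrD mulrDl addrA.
rewrite -/(acnt i t) /cnd /St /sea_S.
by case: ifP => _; rewrite /= ?mul1r ?mul0r ?mulNr ?opprK ?subr0 ?addr0.
Qed.

Lemma acnt0 t i : i \notin supp xs -> acnt i t = 0%N.
Proof. by move=> ni; rewrite /acnt big1 // => s _; rewrite /cnd (negbTE ni). Qed.

Let c := normInf X0.
Let dl := minAbsOn xs (supp xs).

Lemma X0_le i : `|X0 i 0| <= c.
Proof. exact: (le_bigmax _ (fun i => `|X0 i 0|) i). Qed.

Lemma key t i : i \in supp xs -> c < `|X t i 0| -> i \in St t.
Proof.
move=> iS lt; rewrite /St /sea_S /largest inE -/(X t).
have sub : [set j | beats (X t) j i] \subset supp xs :\ i.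
  apply/subsetP => j; rewrite !inE /beats => bj.
  have ji : j != i.
    by apply: contraTneq bj => ->; rewrite ltxx ltnn andbF.
  rewrite ji /=; apply: contraTT bj => nj.
  rewrite (X_eq t j) (@acnt0 t j ltac:(by rewrite inE)) mul0r addr0 negb_or negb_and.
  have h := X0_le j.
  rewrite -leNgt (le_trans h (ltW lt)) /=.
  by rewrite (lt_eqF (le_lt_trans h lt)).
apply: (leq_ltn_trans (subset_leq_card sub)).
have := kS; rewrite (cardsD1 i) iS /= add1n; exact.
Qed.

Variable (Sne : (0 < #|supp xs|)%N).

Lemma dl_le i : i \in supp xs -> dl <= `|xs i 0|.
Proof. by move=> iS; exact: (bigmin_le_cond _ (fun i => `|xs i 0|) iS). Qed.

Lemma dl_pos : 0 < dl.
Proof.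
have /card_gt0P [i0 i0S] := Sne.
apply/bigmin_gtP; split.
  apply: (lt_le_trans _ (le_bigmax _ (fun i => `|xs i 0|) i0)).
  by rewrite normr_gt0; move: i0S; rewrite inE.
by move=> i; rewrite inE normr_gt0.
Qed.

Lemma c_ge0 : 0 <= c.
Proof. have /card_gt0P [i0 _] := Sne; exact: le_trans (normr_ge0 _) (X0_le i0). Qed.

Let B := 2 * c / (eta * dl).

Lemma B_ge0 : 0 <= B.
Proof.
apply: divr_ge0; first by apply: mulr_ge0 => //; exact: c_ge0.
by apply: mulr_ge0; [exact: ltW | exact: ltW dl_pos].
Qed.

Lemma acnt_bound t i : i \in supp xs -> (acnt i t)%:R <= B + 1.
Proof.
move=> iS; elim: t => [|t IH].
  by rewrite /acnt big_ord0; have := B_ge0; lra.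
rewrite /acnt big_ord_recr /= natrD -/(acnt i t).
case cti: (cnd t i); last by rewrite addr0.
have niS : i \notin St t by move: cti; rewrite /cnd iS.
have hX : `|X t i 0| <= c by rewrite leNgt; apply: contra niS; exact: key.
have h1 : `|(acnt i t)%:R * (eta * xs i 0)| <= 2 * c.
  have := lerB_normD ((acnt i t)%:R * (eta * xs i 0)) (X0 i 0).
  rewrite [_ + X0 i 0]addrC -(X_eq t i) => h; have := X0_le i; move: hX h; lra.
have h2 : (acnt i t)%:R * (eta * dl) <= `|(acnt i t)%:R * (eta * xs i 0)|.
  rewrite normrM normr_nat normrM (gtr0_norm eta_gt0).
  by apply: ler_wpM2l => //; apply: ler_wpM2l; [exact: ltW | exact: dl_le].
have : (acnt i t)%:R <= B.
  by rewrite /B ler_pdivlMr ?mulr_gt0 ?dl_pos //; exact: le_trans h2 h1.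
by rewrite lerD2r.
Qed.

Lemma count_bound T : (forall s, (s < T)%N -> sea_u k xs eta X0 s != 0) ->
  T%:R <= k%:R * (1 + B).
Proof.
move=> hu.
have hs : forall s, (s < T)%N -> (1 <= \sum_(i in supp xs) cnd s i)%N.
  move=> s sT; rewrite lt0n; apply/negP => /eqP h0; move/negP: (hu s sT); apply.
  apply/eqP/matrixP => i j; rewrite !mxE.
  case: ifP => // ci; exfalso.
  have cs : cnd s i := ci.
  have iS : i \in supp xs by case/andP: ci.
  by move: h0; rewrite (bigD1 i) //= cs add1n.
have hT : (T <= \sum_(i in supp xs) acnt i T)%N.
  rewrite /acnt exchange_big /=.
  apply: (@leq_trans (\sum_(s < T) 1)%N); first by rewrite sum1_card card_ord.
  by apply: leq_sum => s _; exact: hs s (ltn_ord s).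
apply: (@le_trans _ _ (\sum_(i in supp xs) (acnt i T)%:R)).
  by rewrite -natr_sum ler_nat.
apply: (@le_trans _ _ (\sum_(i in supp xs) (B + 1))).
  by apply: ler_sum => i iS; exact: acnt_bound.
rewrite sumr_const.
have -> : (B + 1) *+ #|supp xs| = #|supp xs|%:R * (1 + B) by rewrite mulr_natl addrC.
apply: ler_wpM2r.
  by have := B_ge0; lra.
by rewrite ler_nat.
Qed.
End Dyn.

Theorem theoremC1 (R : realType) (m n k : nat)
  (A : 'M[R]_(m, n)) (xs : 'cV[R]_n) (e : 'cV[R]_m) (y : 'cV[R]_m)
  (X0 : 'cV[R]_n) (eta : R) :
  (0 < m)%N -> (0 < n)%N -> (0 < k)%N ->
  (1 <= #|supp xs|)%N -> (#|supp xs| <= k)%N ->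
  y = A *m xs + e ->
  0 < eta ->
  exists ts : nat,
    [/\ ts%:R <= k%:R * (1 + 2 * normInf X0 / (eta * minAbsOn xs (supp xs))),
        supp xs \subset sea_S k xs eta X0 ts,
        sea_u k xs eta X0 ts = 0,
        (forall t, (t < ts)%N -> sea_u k xs eta X0 t != 0) &
        argmin_on A y (sea_S k xs eta X0 ts) (sea_out k xs eta X0 A y ts)].
Proof.
move=> m0 n0 k0 S1 Sk ey eta0.
have ex : exists t, sea_u k xs eta X0 t == 0.
  case: (pselect (exists t, sea_u k xs eta X0 t == 0)) => // nex; exfalso.
  have hu : forall t, sea_u k xs eta X0 t != 0.
    by move=> t; apply/negP => h; apply: nex; exists t.
  set bnd := k%:R * (1 + 2 * normInf X0 / (eta * minAbsOn xs (supp xs))).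
  have b0 : 0 <= bnd.
    apply: mulr_ge0 => //; have := @B_ge0 R n xs eta X0 eta0 S1; lra.
  have h1 := @count_bound R n k xs eta X0 eta0 Sk S1 (Num.Def.archi_bound bnd) (fun s _ => hu s).
  have := archi_boundP b0; rewrite -/bnd in h1; lra.
case: (ex_minnP ex) => ts /eqP hts hmin.
have hlt : forall t, (t < ts)%N -> sea_u k xs eta X0 t != 0.
  by move=> t tts; apply/negP => h; have := hmin t h; rewrite leqNgt tts.
exists ts; split => //.
- exact: (@count_bound R n k xs eta X0 eta0 Sk S1 ts hlt).
- apply/subsetP => i iS; apply: contraT => ni.
  move/matrixP: hts => /(_ i 0); rewrite !mxE iS ni /= => /eqP.
  rewrite mulf_eq0 oppr_eq0 (gt_eqF eta0) /=.
  by move: iS; rewrite inE => /negbTE ->.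
- exact: argmin_out.
Qed.
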